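(* $$\sum_{n\ge0}|\mathfrak S_n(1243,2143,321)|x^n=1+x\frac{1-2x+3x^2}{(1-x)^4},$$ and consequently, for all $n\ge1$, $$|\mathfrak S_n(1243,2143,321)|=\binom{n-1}{0}+\binom{n-1}{1}+2\binom{n-1}{2}+2\binom{n-1}{3}.$$
   Context: $\mathfrak S_n(R)$ is the set of permutations of $\{1,\dots,n\}$ avoiding every pattern in $R$, where $\pi$ avoids $\sigma$ if no subsequence of $\pi$ has the same relative order as $\sigma$. *)

(* Defs.v *)
From mathcomp Require Import all_boot all_order all_algebra all_fingroup.
Set Implicit Arguments. Unset Strict Implicit. Unset Printing Implicit Defensive.

(* A pattern is given in one-line notation as a sequence of naturals,
   e.g. [:: 1; 2; 4; 3] for 1243.  A permutation pi of {0,..,n-1}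
   (pi : 'S_n) contains the pattern s if there are positions
   f 0 < f 1 < ... < f (k-1) (k = size s) such that the values
   pi (f 0), ..., pi (f (k-1)) are in the same relative order as s. *)
Definition contains_pat (n : nat) (pi : 'S_n) (s : seq nat) : bool :=
  [exists f : {ffun 'I_(size s) -> 'I_n},
     [forall i : 'I_(size s), forall j : 'I_(size s),
        ((i < j)%N ==> (f i < f j)%N) &&
        (((pi (f i) : nat) < pi (f j))%N == (nth 0 s i < nth 0 s j)%N)]].

Definition avoids_pat (n : nat) (pi : 'S_n) (s : seq nat) : bool :=
  ~~ contains_pat pi s.

Definition Av (n : nat) (R : seq (seq nat)) : {set 'S_n} :=
  [set pi : 'S_n | all (avoids_pat pi) R].

Definition R14 : seq (seq nat) := [:: [:: 1; 2; 4; 3]; [:: 2; 1; 4; 3]; [:: 3; 2; 1]].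

(* Main.v *)
Require Import Defs.
From mathcomp Require Import all_boot all_order all_algebra all_fingroup.
Import GRing.Theory.
From mathcomp Require Import zify ring.
Set Implicit Arguments. Unset Strict Implicit. Unset Printing Implicit Defensive.

Ltac splitifs := repeat match goal with |- context [if ?b then _ else _] => let H := fresh in case H: b end.

Definition P3 (s : seq nat) := forall i j k, i < j -> j < k -> k < size s ->
  ~~ ((nth 0 s k < nth 0 s j) && (nth 0 s j < nth 0 s i)).
Definition P4 (s : seq nat) := forall i j k l, i < j -> j < k -> k < l -> l < size s ->
  ~~ [&& nth 0 s i < nth 0 s l, nth 0 s j < nth 0 s l & nth 0 s l < nth 0 s k].

Definition g0 m z i := if i < m - 1 - z then z + 1 + i else if i == m - 1 - z then m else i - (m - z).
Definition g1 m z y k i :=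
  if i < k then z + 1 + i else if i == k then y else if i <= m - 1 - z then z + i
  else if i == m - z then m else if i - (m - z + 1) < y then i - (m - z + 1) else i - (m - z).

Lemma P3_col f n (c : nat -> bool) :
  (forall i j, i < j -> j < n -> c i = c j -> f i < f j) -> P3 (mkseq f n).
Proof.
move=> H i j k ij jk; rewrite size_mkseq => kn.
rewrite !nth_mkseq; try lia.
have Hij := H i j ij ltac:(lia). have Hjk := H j k jk kn. have Hik := H i k ltac:(lia) kn.
apply/negP => /andP [h1 h2].
case E1: (c i == c j); first by have := H i j ij ltac:(lia) (eqP E1); lia.
case E2: (c j == c k); first by have := H j k jk kn (eqP E2); lia.
have E3 : c i = c k by move: E1 E2; case: (c i); case: (c j); case: (c k).
have := H i k ltac:(lia) kn E3; lia.
Qed.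

Lemma P4_split f n q p0 :
  (forall k l, k < l -> l < n -> f l < f k -> (k <= q /\ q < l) \/ f l = 0) ->
  (forall a l, a <= q -> q < l -> l < n -> f a < f l -> a = p0) -> P4 (mkseq f n).
Proof.
move=> H1 H2 i j k l ij jk kl; rewrite size_mkseq => ln.
rewrite !nth_mkseq; try lia.
apply/negP => /and3P [a b c].
case: (H1 k l kl ln c) => [[kq ql]|f0]; last by lia.
have := H2 i l ltac:(lia) ql ln a. have := H2 j l ltac:(lia) ql ln b. lia.
Qed.

Lemma g0_P3 m z : z < m -> P3 (mkseq (g0 m z) m.+1).
Proof.
move=> zm; apply: (P3_col (c := fun i => i <= m - 1 - z)) => i j ij jm /= e.
move: e; rewrite /g0; splitifs; intros; lia.
Qed.

Lemma g0_P4 m z : z < m -> P4 (mkseq (g0 m z) m.+1).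
Proof.
move=> zm; apply: (P4_split (q := m - 1 - z) (p0 := 0)).
- move=> k l kl lm; rewrite /g0; splitifs; intros; lia.
- move=> a l aq ql lm; rewrite /g0; splitifs; intros; lia.
Qed.

Lemma g1_P3 m z y k : y < z -> z < m -> k <= m - 1 - z -> (y == 0) || (k == 0) ->
  P3 (mkseq (g1 m z y k) m.+1).
Proof.
move=> yz zm kL yk.
apply: (P3_col (c := fun i => if i == k then y != 0 else i <= m - z)) => i j ij jm /= e.
case/orP: yk => /eqP yk; subst; move: e; rewrite /g1; splitifs; intros; lia.
Qed.

Lemma g1_P4 m z y k : y < z -> z < m -> k <= m - 1 - z -> (y == 0) || (k == 0) ->
  P4 (mkseq (g1 m z y k) m.+1).
Proof.
move=> yz zm kL yk; apply: (P4_split (q := m - z) (p0 := k)).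
- move=> a l al lm; case/orP: yk => /eqP yk; subst; rewrite /g1; splitifs; intros; lia.
- move=> a l aq ql lm; case/orP: yk => /eqP yk; subst; rewrite /g1; splitifs; intros; lia.
Qed.

Lemma perm_mkseq f n : (forall i, i < n -> f i < n) ->
  (forall i j, i < j -> j < n -> f i != f j) -> perm_eq (mkseq f n) (iota 0 n).
Proof.
move=> Hb Hi.
have u : uniq (mkseq f n).
  apply/mkseq_uniqP => i j; rewrite !inE => ilt jlt e.
  case: (ltngtP i j) => // c; first by have := Hi i j c jlt; rewrite e eqxx.
  by have := Hi j i c ilt; rewrite e eqxx.
have sub : {subset mkseq f n <= iota 0 n}.
  move=> v /mapP [i]; rewrite mem_iota => /andP [_ ilt] ->; rewrite mem_iota /=; exact: Hb.
have [_ e] := uniq_min_size u sub ltac:(by rewrite size_iota size_mkseq).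
by apply: uniq_perm => //; apply: iota_uniq.
Qed.

Lemma F0_perm m z : z < m -> perm_eq (mkseq (g0 m z) m.+1) (iota 0 m.+1).
Proof.
move=> zm; apply: perm_mkseq.
- move=> i im; rewrite /g0; splitifs; lia.
- move=> i j ij jm; apply/eqP; rewrite /g0; splitifs; lia.
Qed.

Lemma F1_perm m z y k : y < z -> z < m -> k <= m - 1 - z ->
  perm_eq (mkseq (g1 m z y k) m.+1) (iota 0 m.+1).
Proof.
move=> yz zm kL; apply: perm_mkseq.
- move=> i im; rewrite /g1; splitifs; lia.
- move=> i j ij jm; apply/eqP; rewrite /g1; splitifs; lia.
Qed.

Lemma g0_last m z : z < m -> g0 m z m = z.
Proof. move=> zm; rewrite /g0; splitifs; lia. Qed.

Lemma g1_last m z y k : y < z -> z < m -> k <= m - 1 - z -> g1 m z y k m = z.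
Proof. move=> yz zm kL; rewrite /g1; splitifs; lia. Qed.

Lemma g1_front m z y k i : i <= m - 1 - z ->
  g1 m z y k i = if i < k then z + 1 + i else if i == k then y else z + i.
Proof. move=> iL; rewrite /g1; splitifs; lia. Qed.

Definition F0 m z := mkseq (g0 m z) m.+1.
Definition F1 m z y k := mkseq (g1 m z y k) m.+1.
Definition yof z t := if t < z then t else 0.
Definition kof z t := if t < z then 0 else t - z.
Definition Elist m := [seq F0 m z | z <- iota 0 m] ++
  [seq F1 m z (yof z t) (kof z t) | z <- iota 1 m.-1, t <- iota 1 m.-1].

Lemma mk_eq (f f' : nat -> nat) n i : mkseq f n = mkseq f' n -> i < n -> f i = f' i.
Proof. by move=> e lt; have := congr1 (nth 0 ^~ i) e; rewrite !nth_mkseq. Qed.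

Lemma size_Elist m : 0 < m -> size (Elist m) = 1 + m.-1 * m.
Proof.
move=> m0; rewrite size_cat size_map size_allpairs !size_iota.
case: m m0 => // m _ /=; lia.
Qed.

Lemma Elist_uniq m : uniq (Elist m).
Proof.
rewrite cat_uniq; apply/and3P; split.
- rewrite map_inj_in_uniq ?iota_uniq // => z z'; rewrite !mem_iota /= => zm z'm e.
  have := mk_eq e (ltnSn m); rewrite !g0_last //; lia.
- apply/hasPn => s /allpairsP [[z t] [/= zin tin ->]]; apply/mapP => [[z' z'in e]].
  move: zin tin z'in; rewrite !mem_iota /= => zin tin z'in.
  have yz : yof z t < z by rewrite /yof; splitifs; lia.
  have kL : kof z t <= m - 1 - z by rewrite /kof; splitifs; lia.
  have := mk_eq e (ltnSn m); rewrite g0_last ?g1_last //; try lia; move=> ez; subst z'.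
  have := mk_eq (i := m - 1 - z) e ltac:(lia); rewrite g1_front // /g0.
  move: yz kL; rewrite /yof /kof; splitifs; lia.
- apply: allpairs_uniq; rewrite ?iota_uniq // => [[z t] [z' t']].
  move=> /allpairsP [[z1 t1] [/= z1in t1in [-> ->]]] /allpairsP [[z2 t2] [/= z2in t2in [-> ->]]] /= e.
  move: z1in t1in z2in t2in; rewrite !mem_iota /= => z1in t1in z2in t2in.
  have yz1 : yof z1 t1 < z1 by rewrite /yof; splitifs; lia.
  have kL1 : kof z1 t1 <= m - 1 - z1 by rewrite /kof; splitifs; lia.
  have yz2 : yof z2 t2 < z2 by rewrite /yof; splitifs; lia.
  have kL2 : kof z2 t2 <= m - 1 - z2 by rewrite /kof; splitifs; lia.
  have := mk_eq e (ltnSn m); rewrite !g1_last //; try lia; move=> ez; subst z2.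
  have e1 := mk_eq (i := kof z1 t1) e ltac:(lia).
  have e2 := mk_eq (i := kof z1 t2) e ltac:(lia).
  rewrite !g1_front in e1 e2; try lia.
  move: e1 e2 yz1 yz2 kL1 kL2; rewrite /yof /kof; splitifs; intros; try lia.
  all: congr pair; lia.
Qed.

Ltac splitifsP := repeat (match goal with |- context [if ?b then _ else _] => let H := fresh in case H: b end; try (exfalso; lia)).

Lemma nthIc a n s i : nth 0 (iota a n ++ s) i = if i < n then a + i else nth 0 s (i - n).
Proof. by rewrite nth_cat size_iota; case: ifP => // h; rewrite nth_iota. Qed.
Lemma nthC (x : nat) s i : nth 0 (x :: s) i = if i == 0 then x else nth 0 s i.-1.
Proof. by case: i. Qed.
Lemma nthI a n i : nth 0 (iota a n) i = if i < n then a + i else 0.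
Proof. by case: ifP => h; [rewrite nth_iota | rewrite nth_default // size_iota leqNgt h]. Qed.

Definition E0 m z := iota (z + 1) (m - 1 - z) ++ m :: iota 0 z.+1.
Definition E1 m z y k := iota (z + 1) k ++ y :: iota (z + 1 + k) (m - 1 - z - k) ++
  m :: (iota 0 y ++ iota y.+1 (z - y)).

Lemma E0_F0 m z : z < m -> E0 m z = F0 m z.
Proof.
move=> zm; apply: (@eq_from_nth _ 0).
  rewrite size_mkseq size_cat /= !size_iota; lia.
move=> i; rewrite size_cat /= !size_iota => im.
rewrite nth_mkseq; last lia.
rewrite /E0 nthIc nthC nthI /g0; splitifsP; lia.
Qed.

Lemma E1_F1 m z y k : y < z -> z < m -> k <= m - 1 - z -> E1 m z y k = F1 m z y k.
Proof.
move=> yz zm kL; apply: (@eq_from_nth _ 0).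
  rewrite size_mkseq size_cat /= size_cat /= size_cat !size_iota; lia.
move=> i; rewrite size_cat /= size_cat /= size_cat !size_iota => im.
rewrite nth_mkseq; last lia.
rewrite /E1 nthIc nthC nthIc nthC nthIc nthI /g1; splitifsP; lia.
Qed.


Ltac clean := repeat match goal with H : ?T |- _ =>
  lazymatch T with
  | is_true (_ <= _) => fail | is_true (_ < _) => fail | is_true (_ != _) => fail
  | is_true (_ == _) => fail | is_true (~~ _) => fail | is_true (_ && _) => fail | is_true (_ || _) => fail
  | @eq ?A _ _ => tryif unify A nat then fail else clear H
  | nat => fail | _ => clear H end end.
Ltac slia := clean; lia.

Lemma Dchar m s : 0 < m -> perm_eq s (iota 0 m.+1) -> P3 s -> P4 s -> nth 0 s m != m ->
  s \in Elist m.
Proof.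
move=> m0 ps H3 H4 lastm.
have us : uniq s by rewrite (perm_uniq ps) iota_uniq.
have ss : size s = m.+1 by rewrite (perm_size ps) size_iota.
have ms : forall v, (v \in s) = (v <= m) by move=> v; rewrite (perm_mem ps) mem_iota.
have nsb : forall i, i < m.+1 -> nth 0 s i <= m by move=> i ilt; rewrite -ms mem_nth // ss.
have dist : forall i j, i < m.+1 -> j < m.+1 -> (nth 0 s i == nth 0 s j) = (i == j).
  by move=> i j hi hj; rewrite nth_uniq // ss.
have distn : forall i j, i < m.+1 -> j < m.+1 -> i != j -> nth 0 s i != nth 0 s j.
  by move=> i j hi hj hij; rewrite dist.
set p := index m s.
have pm1 : p < m.+1 by rewrite -ss index_mem ms.
have sp : nth 0 s p = m by rewrite nth_index // ms.
have pm : p < m.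
  case: (ltngtP p m) => //; first slia.
  by move=> e; move: lastm; rewrite -{1}e sp eqxx.
set z := nth 0 s m.
have zm : z < m by have := nsb m (ltnSn m); move: lastm; rewrite -/z; slia.
have HF1 : forall i j, p < i -> i < j -> j <= m -> nth 0 s i < nth 0 s j.
  move=> i j pi ij jm; have := H3 p i j pi ij (ltac:(rewrite ss; slia)); rewrite sp.
  have := distn i j ltac:(slia) ltac:(slia) ltac:(slia); have := distn i p ltac:(slia) ltac:(slia) ltac:(slia).
  have := nsb i ltac:(slia); rewrite sp; slia.
have HF2 : forall i, p < i -> i <= m -> nth 0 s i <= z.
  move=> i pi im; case: (ltngtP i m) => [lt||e]; [ | slia | by rewrite e].
  by apply: ltnW; apply: HF1.
have HF3 : forall i j, i < j -> j < p -> ~~ ((nth 0 s i < z) && (nth 0 s j < z)).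
  move=> i j ij jp; have := H4 i j p m ij jp pm ltac:(rewrite ss; slia); rewrite sp -/z; slia.
have HF4 : forall i j, i < j -> j < p -> z < nth 0 s i -> z < nth 0 s j -> nth 0 s i < nth 0 s j.
  move=> i j ij jp zi zj; have := H3 i j m ij ltac:(slia) ltac:(rewrite ss; slia); rewrite -/z.
  have := distn i j ltac:(slia) ltac:(slia) ltac:(slia); slia.
have HF5 : forall i j, i < j -> j < p -> z < nth 0 s i -> nth 0 s j < z -> nth 0 s j = 0.
  move=> i j ij jp zi jz; case: (posnP (nth 0 s j)) => // j0.
  set q := index 0 s.
  have qm : q < m.+1 by rewrite -ss index_mem ms.
  have sq : nth 0 s q = 0 by rewrite nth_index // ms.
  have qp : q != p by rewrite -dist // sq sp; slia.
  have qj : q != j by rewrite -dist ?sq //; slia.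
  case: (ltngtP q p) => [qlp||e]; last by rewrite e eqxx in qp.
  + case: (ltngtP q j) => [lt|lt|e]; last by rewrite e eqxx in qj.
    * by have := HF3 q j lt jp; rewrite sq; slia.
    * by have := HF3 j q lt qlp; rewrite sq; slia.
  + by move=> pq; have := H3 i j q ij ltac:(slia) ltac:(rewrite ss; slia); rewrite sq; slia.
set B := take p s; set S := drop p.+1 s.
have sdec : s = B ++ m :: S by rewrite /B /S -{1}(cat_take_drop p s) (drop_nth 0) ?ss // sp.
have sB : size B = p by rewrite /B size_takel // ss; slia.
have sS : size S = m - p by rewrite /S size_drop ss.
have nB : forall i, i < p -> nth 0 B i = nth 0 s i by move=> i ip; rewrite /B nth_take.
have nS : forall i, nth 0 S i = nth 0 s (p.+1 + i) by move=> i; rewrite /S nth_drop.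
have zdef : nth 0 s m = z by [].
clearbody B S z p.
have us' := us; move: us'; rewrite sdec cat_uniq cons_uniq => /and3P [uB hBS /andP [mS uS]].
move/hasPn: hBS => hBS.
have inS : forall v, v \in S -> v <= z.
  move=> v /(nthP 0) [i]; rewrite sS nS => il <-; apply: HF2; slia.
have zS : z \in S.
  apply/(nthP 0); exists (m - p.+1); first by rewrite sS; slia.
  by rewrite nS -zdef; congr nth; slia.
have inB : forall v, v \in B -> v <= m /\ v != m /\ v != z.
  move=> v vB; have : v \in s by rewrite sdec mem_cat vB.
  rewrite ms => vm; split => //; split.
  - by apply/eqP => e; subst v; move: (hBS m); rewrite inE eqxx vB => /(_ isT).
  - by apply/eqP => e; subst v; move: (hBS z); rewrite inE zS orbT vB => /(_ isT).
have cover : forall v, v <= m -> [\/ v \in B, v = m | v \in S].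
  by move=> v; rewrite -ms sdec mem_cat inE => /orP [->|/orP [/eqP ->|->]]; [constructor 1|constructor 2|constructor 3].
have Ssort : sorted ltn S.
  rewrite sorted_pairwise; last exact: ltn_trans.
  apply/(pairwiseP 0) => i j; rewrite !inE sS => il jl ij; rewrite !nS; apply: HF1; slia.
have ltn_anti : antisymmetric ltn by move=> a b; slia.
have Bpw : pairwise (fun a b => (z < a) ==> (z < b) ==> (a < b)) B.
  apply/(pairwiseP 0) => i j; rewrite !inE sB => il jl ij; rewrite !nB //.
  by apply/implyP => h1; apply/implyP => h2; apply: HF4.
have zmem : forall v, v \in s -> z < v -> v != m -> v \in B.
  move=> v; rewrite ms => vm zv vnm; case: (cover v vm) => // [e|vS].
    by rewrite e eqxx in vnm.
  by have := inS v vS; slia.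
case: (boolP (has (fun v => v < z) B)) => [/hasP [y yB yz] | /hasPn noB].
have {}yz : y < z := yz.
set k := index y B.
have kdef : index y B = k by [].
clearbody k.
have kp : k < p by rewrite -sB -kdef index_mem.
have sk : nth 0 s k = y by rewrite -nB // -kdef nth_index.
have others : forall i, i < p -> i != k -> z < nth 0 s i.
  move=> i ip ik.
  have niz : nth 0 s i != z by rewrite -zdef distn //; slia.
  case: (ltngtP (nth 0 s i) z) => [lt|//|e]; last by rewrite e eqxx in niz.
  case: (ltngtP i k) => [ik'|ik'|e]; last by rewrite e eqxx in ik.
    by have := HF3 i k ik' kp; rewrite sk; slia.
  by have := HF3 k i ik' ip; rewrite sk; slia.
have bigB : forall v, v \in B -> v != y -> z < v.
  move=> v /(nthP 0) [i]; rewrite sB => ip <- vy; rewrite nB //; apply: others => //.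
  by apply/eqP => e; move: vy; rewrite e -kdef nth_index // eqxx.
have Bdec : B = take k B ++ y :: drop k.+1 B by rewrite -{1}(cat_take_drop k B) (drop_nth 0) ?sB // -kdef nth_index.
have uB' : uniq (take k B ++ y :: drop k.+1 B) by rewrite -Bdec.
move: uB'; rewrite cat_uniq cons_uniq => /and3P [_ hyt /andP [ynd _]].
have ynt : y \notin take k B by apply: contra hyt => h; apply/hasP; exists y => //; rewrite inE eqxx.
set Bf := filter (fun v => z < v) B.
have Bfeq : Bf = iota (z + 1) (m - 1 - z).
  apply: (sorted_eq ltn_trans ltn_anti); last 1 first.
  - apply: uniq_perm; [exact: filter_uniq | exact: iota_uniq |].
    move=> v; rewrite mem_filter mem_iota; apply/idP/idP.
      by case/andP => zv vB; have [vm [vnm _]] := inB v vB; slia.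
    move=> h; rewrite zmem ?ms; slia.
  - rewrite sorted_pairwise; last exact: ltn_trans.
    apply: (sub_in_pairwise (P := fun v => z < v)); last exact: (pairwise_filter _ Bpw).
      by move=> a b ha hb /implyP /(_ ha) /implyP /(_ hb).
    by apply/allP => v; rewrite mem_filter => /andP [].
  - exact: iota_ltn_sorted.
have Bfdec : Bf = take k B ++ drop k.+1 B.
  rewrite /Bf {1}Bdec filter_cat /= ltnNge (ltnW yz) /=.
  congr cat; apply/all_filterP/allP => v vin.
    by apply: bigB; [rewrite -(cat_take_drop k B) mem_cat vin | apply: contraNneq ynt => <-].
  by apply: bigB; [rewrite -(cat_take_drop k.+1 B) mem_cat vin orbT | apply: contraNneq ynd => <-].
have stk : size (take k B) = k by rewrite size_takel // sB; slia.
have kL : k <= m - 1 - z by have := congr1 size Bfeq; rewrite Bfdec size_cat stk size_iota; slia.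
have Tk : take k B = iota (z + 1) k.
  by rewrite -(take_size_cat (drop k.+1 B) stk) -Bfdec Bfeq take_iota; congr iota; slia.
have Dk : drop k.+1 B = iota (z + 1 + k) (m - 1 - z - k).
  by rewrite -(drop_size_cat (drop k.+1 B) stk) -Bfdec Bfeq drop_iota.
have y0 : (y == 0) || (k == 0).
  case: (posnP k) => [_|kpos]; first by rewrite ?orbT.
  have := HF5 0 k kpos kp (others 0 ltac:(slia) ltac:(slia)); rewrite sk => ->; by [|slia].
set T := iota 0 y ++ iota y.+1 (z - y).
have Seq : S = T.
  apply: (sorted_eq ltn_trans ltn_anti) => //.
  - rewrite sorted_pairwise; last exact: ltn_trans.
    apply/(pairwiseP 0) => i j; rewrite !inE /T size_cat !size_iota => il jl ij.
    rewrite !nthIc !nthI; clean; splitifsP; lia.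
  - apply: uniq_perm => //.
      rewrite /T cat_uniq !iota_uniq /= andbT; apply/hasPn => v; rewrite !mem_iota; slia.
    move=> v; rewrite /T mem_cat !mem_iota; apply/idP/idP.
      move=> vS; have := inS v vS; have : v != y.
        by apply: contraTneq vS => ->; apply/negP => yS; move: (hBS y); rewrite inE yS orbT yB => /(_ isT).
      slia.
    move=> h; case: (cover v ltac:(slia)) => [vB|e|vS] //; last by slia.
    case: (eqVneq v y) => [e|vy]; first by slia.
    by have := bigB v vB vy; slia.
have -> : B ++ m :: S = F1 m z y k.
  by rewrite -E1_F1 // /E1 Bdec Tk Dk Seq /T -catA.
rewrite mem_cat; apply/orP; right; apply/allpairsP.
exists (z, if y == 0 then z + k else y) => /=; rewrite !mem_iota.
split; [slia | case: eqP => e; [clear -kL zm m0 yz; lia | have : y != 0 by apply/eqP]; clear -yz zm; lia |].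
case: eqP => e.
  by rewrite /yof /kof ltnNge leq_addr /= addKn e.
have k0 : k = 0 by move: y0; case: eqP => // _ /eqP.
by rewrite /yof /kof yz k0.
have bigB : forall v, v \in B -> z < v.
  move=> v vB; have := noB v vB; have [_ [_ vz]] := inB v vB; move: vz => /= vz; slia.
have Bsort : sorted ltn B.
  rewrite sorted_pairwise; last exact: ltn_trans.
  apply: (sub_in_pairwise (P := fun v => z < v)) Bpw.
  - by move=> a b ha hb /implyP /(_ ha) /implyP /(_ hb).
  - by apply/allP => v /bigB.
have Beq : B = iota (z + 1) (m - 1 - z).
  apply: (sorted_eq ltn_trans ltn_anti) => //; first exact: iota_ltn_sorted.
  apply: uniq_perm => //; first exact: iota_uniq.
  move=> v; rewrite mem_iota; apply/idP/idP.
    by move=> vB; have := bigB v vB; have [vm [vnm _]] := inB v vB; slia.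
  move=> h; apply: zmem; rewrite ?ms; slia.
have Seq : S = iota 0 z.+1.
  apply: (sorted_eq ltn_trans ltn_anti) => //; first exact: iota_ltn_sorted.
  apply: uniq_perm => //; first exact: iota_uniq.
  move=> v; rewrite mem_iota; apply/idP/idP.
    by move=> vS; have := inS v vS; slia.
  move=> h; case: (cover v ltac:(slia)) => // [vB|e].
    by have := bigB v vB; slia.
  slia.
have -> : B ++ m :: S = F0 m z by rewrite -E0_F0 // Beq Seq.
rewrite mem_cat; apply/orP; left; apply/mapP; exists z => //; rewrite mem_iota; slia.
Qed.


Definition Qb (s : seq nat) : bool :=
  [forall i : 'I_(size s), forall j : 'I_(size s), forall k : 'I_(size s),
     ((i < j) && (j < k)) ==> ~~ ((nth 0 s k < nth 0 s j) && (nth 0 s j < nth 0 s i))] &&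
  [forall i : 'I_(size s), forall j : 'I_(size s), forall k : 'I_(size s), forall l : 'I_(size s),
     [&& i < j, j < k & k < l] ==>
     ~~ [&& nth 0 s i < nth 0 s l, nth 0 s j < nth 0 s l & nth 0 s l < nth 0 s k]].

Lemma QbP s : reflect (P3 s /\ P4 s) (Qb s).
Proof.
apply: (iffP andP) => [[/forallP h3 /forallP h4] | [h3 h4]]; split.
- move=> i j k ij jk ks.
  have := h3 (Ordinal (ltn_trans ij (ltn_trans jk ks))) => /forallP /(_ (Ordinal (ltn_trans jk ks))) /forallP /(_ (Ordinal ks)) /implyP.
  by apply; rewrite /= ij jk.
- move=> i j k l ij jk kl ls.
  have := h4 (Ordinal (ltn_trans ij (ltn_trans jk (ltn_trans kl ls)))) => /forallP /(_ (Ordinal (ltn_trans jk (ltn_trans kl ls)))) /forallP /(_ (Ordinal (ltn_trans kl ls))) /forallP /(_ (Ordinal ls)) /implyP.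
  by apply; rewrite /= ij jk kl.
- apply/forallP => i; apply/forallP => j; apply/forallP => k; apply/implyP => /andP [ij jk].
  exact: h3.
- apply/forallP => i; apply/forallP => j; apply/forallP => k; apply/forallP => l.
  apply/implyP => /and3P [ij jk kl]; exact: h4.
Qed.

Lemma count_split (T : Type) (a b : pred T) (s : seq T) :
  count a s = count (fun x => a x && b x) s + count (fun x => a x && ~~ b x) s.
Proof. elim: s => //= x s ->; case: (a x); case: (b x) => /=; lia. Qed.

Lemma Qb_rcons m s : all (fun v => v < m) s -> size s = m -> Qb (rcons s m) = Qb s.
Proof.
move=> /allP al ss.
have nr : forall i, i < m -> nth 0 (rcons s m) i = nth 0 s i.
  by move=> i im; rewrite nth_rcons ss im.
have nl : nth 0 (rcons s m) m = m by rewrite nth_rcons ss ltnn eqxx.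
have bnd : forall i, i < m -> nth 0 s i < m by move=> i im; apply: al; rewrite mem_nth // ss.
apply/QbP/QbP => [[h3 h4] | [h3 h4]]; split.
- move=> i j k ij jk ks; rewrite ss in ks.
  have := h3 i j k ij jk ltac:(rewrite size_rcons ss; lia).
  by rewrite (nr i) ?(nr j) ?(nr k) //; lia.
- move=> i j k l ij jk kl ls; rewrite ss in ls.
  have := h4 i j k l ij jk kl ltac:(rewrite size_rcons ss; lia).
  by rewrite (nr i) ?(nr j) ?(nr k) ?(nr l) //; lia.
- move=> i j k ij jk; rewrite size_rcons ss => ks.
  case: (ltngtP k m) => [km|km|ekm]; [ | lia | ].
    by rewrite (nr i) ?(nr j) ?(nr k) //; try lia; apply: h3; rewrite ?ss.
  by rewrite ekm nl (nr i) ?(nr j) //; try lia; have := bnd j ltac:(lia); lia.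
- move=> i j k l ij jk kl; rewrite size_rcons ss => ls.
  case: (ltngtP l m) => [lm|lm|elm]; [ | lia | ].
    by rewrite (nr i) ?(nr j) ?(nr k) ?(nr l) //; try lia; apply: h4; rewrite ?ss.
  by rewrite elm nl (nr i) ?(nr j) ?(nr k) //; try lia; have := bnd k ltac:(lia); lia.
Qed.

Lemma perm_rcons2 (s t : seq nat) x : perm_eq (rcons s x) (rcons t x) = perm_eq s t.
Proof. by rewrite -!cats1 perm_cat2r. Qed.

Definition a n := count Qb (permutations (iota 0 n)).

Lemma a_rec m : a m.+1 = a m + size (Elist m).
Proof.
rewrite /a (count_split _ (fun s => nth 0 s m == m)).
congr addn.
- rewrite -count_filter.
  have pe : perm_eq [seq s <- permutations (iota 0 m.+1) | nth 0 s m == m]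
                    [seq rcons s m | s <- permutations (iota 0 m)].
    apply: uniq_perm.
    + exact: filter_uniq (permutations_uniq _).
    + rewrite map_inj_uniq ?permutations_uniq //; exact: rcons_injl.
    + move=> s; rewrite mem_filter mem_permutations; apply/idP/idP.
      * case/andP => sm ps; apply/mapP.
        have ss : size s = m.+1 by rewrite (perm_size ps) size_iota.
        case/lastP: s sm ps ss => [//|s x]; rewrite size_rcons => sm ps [ss].
        rewrite nth_rcons ss ltnn eqxx in sm; move/eqP: sm => xm; subst x.
        exists s => //; rewrite mem_permutations.
        have e : iota 0 m.+1 = rcons (iota 0 m) m by rewrite -addn1 iotaD cats1.
        by rewrite e perm_rcons2 in ps.
      * case/mapP => s' ps' ->; rewrite mem_permutations in ps'.
        have ss : size s' = m by rewrite (perm_size ps') size_iota.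
        have -> : iota 0 m.+1 = rcons (iota 0 m) m by rewrite -addn1 iotaD cats1.
        by rewrite nth_rcons ss ltnn !eqxx perm_rcons2 ps'.
  rewrite (seq.permP pe) count_map; apply: eq_in_count => s; rewrite mem_permutations => ps /=.
  apply: Qb_rcons; last by rewrite (perm_size ps) size_iota.
  by apply/allP => v; rewrite (perm_mem ps) mem_iota.
- rewrite -size_filter; apply: perm_size; apply: uniq_perm.
  + exact: filter_uniq (permutations_uniq _).
  + exact: Elist_uniq.
  + move=> s; rewrite mem_filter mem_permutations; apply/idP/idP.
    * case/andP => /andP [q ls] ps; case/QbP: q => h3 h4.
      case: (posnP m) => [m0|m0]; last exact: Dchar.
      have : nth 0 s m \in s by rewrite mem_nth // (perm_size ps) size_iota.
      by rewrite (perm_mem ps) mem_iota; move: ls; rewrite m0; lia.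
    * rewrite mem_cat => /orP [/mapP [z] | /allpairsP [[z t] [/=]]].
        rewrite mem_iota => zm ->.
        rewrite /F0 nth_mkseq // g0_last; last lia.
        rewrite F0_perm; last lia.
        have [h3 h4] : P3 (mkseq (g0 m z) m.+1) /\ P4 (mkseq (g0 m z) m.+1).
          by split; [apply: g0_P3 | apply: g0_P4]; lia.
        by rewrite (introT (QbP _) (conj h3 h4)) /=; apply/negP => /eqP; lia.
      rewrite !mem_iota => zin tin ->.
      have yz : yof z t < z by rewrite /yof; splitifs; lia.
      have kL : kof z t <= m - 1 - z by rewrite /kof; splitifs; lia.
      have yk : (yof z t == 0) || (kof z t == 0) by rewrite /yof /kof; case: ifP => _; rewrite eqxx ?orbT.
      rewrite /F1 nth_mkseq // g1_last //; try lia.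
      rewrite F1_perm //; try lia.
      have [h3 h4] : P3 (mkseq (g1 m z (yof z t) (kof z t)) m.+1) /\ P4 (mkseq (g1 m z (yof z t) (kof z t)) m.+1).
        by split; [apply: g1_P3 | apply: g1_P4]; lia.
      by rewrite (introT (QbP _) (conj h3 h4)) /=; apply/negP => /eqP; lia.
Qed.


Definition phi n (pi : 'S_n) : seq nat := [seq val (pi i) | i <- enum 'I_n].

Lemma size_phi n (pi : 'S_n) : size (phi pi) = n.
Proof. by rewrite size_map size_enum_ord. Qed.

Lemma nth_phi n (pi : 'S_n) (i : 'I_n) : nth 0 (phi pi) i = pi i.
Proof. by rewrite (nth_map i) ?size_enum_ord // nth_ord_enum. Qed.

Lemma phi_perm n (pi : 'S_n) : perm_eq (phi pi) (iota 0 n).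
Proof.
apply: uniq_perm; last first.
- move=> v; rewrite mem_iota /=; apply/mapP/idP => [[i _ ->] | h]; first exact: ltn_ord.
  exists (pi^-1%g (Ordinal h)); first by rewrite mem_enum.
  by rewrite permKV.
- exact: iota_uniq.
- rewrite map_inj_uniq ?enum_uniq // => i j /val_inj; exact: perm_inj.
Qed.

Lemma phi_inj n : injective (@phi n).
Proof.
move=> p q e; apply/permP => i; apply: val_inj.
by have := congr1 (nth 0 ^~ i) e; rewrite !nth_phi.
Qed.

Lemma phi_surj n s : perm_eq s (iota 0 n) -> exists pi : 'S_n, phi pi = s.
Proof.
move=> ps.
have us : uniq s by rewrite (perm_uniq ps) iota_uniq.
have ss : size s = n by rewrite (perm_size ps) size_iota.
have bnd : forall i : 'I_n, nth 0 s i < n.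
  move=> i; have : nth 0 s i \in iota 0 n by rewrite -(perm_mem ps) mem_nth // ss.
  by rewrite mem_iota.
pose f (i : 'I_n) : 'I_n := insubd i (nth 0 s i).
have fv : forall i, val (f i) = nth 0 s i by move=> i; rewrite /f insubdK //; exact: bnd.
have finj : injective f.
  move=> i j /(congr1 val); rewrite !fv => /eqP; rewrite nth_uniq ?ss // => /eqP; exact: val_inj.
exists (perm finj); apply: (@eq_from_nth _ 0); first by rewrite size_phi ss.
move=> i; rewrite size_phi => ilt.
by rewrite (nth_phi _ (Ordinal ilt)) permE fv.
Qed.

Lemma contains_of n (pi : 'S_n) (p : seq nat) (idx : seq 'I_n) (x0 : 'I_n) :
  size idx = size p ->
  (forall a b, a < b -> b < size p -> nth x0 idx a < nth x0 idx b) ->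
  (forall a b, a < size p -> b < size p -> (pi (nth x0 idx a) < pi (nth x0 idx b)) = (nth 0 p a < nth 0 p b)) ->
  contains_pat pi p.
Proof.
move=> si h1 h2; apply/existsP; exists [ffun t : 'I_(size p) => nth x0 idx t].
apply/forallP => a; apply/forallP => b; rewrite !ffunE; apply/andP; split.
  by apply/implyP => ab; apply: h1.
by rewrite h2.
Qed.

Lemma contains_get n (pi : 'S_n) (p : seq nat) :
  contains_pat pi p -> exists f : 'I_(size p) -> 'I_n,
    forall a b : 'I_(size p), ((a < b) ==> (f a < f b)) && ((pi (f a) < pi (f b)) == (nth 0 p a < nth 0 p b)).
Proof.
case/existsP => f /forallP h; exists f => a b.
by have /forallP := h a => /(_ b).
Qed.

Lemma dval n (pi : 'S_n) (x y : 'I_n) : x != y -> nat_of_ord (pi x) != nat_of_ord (pi y).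
Proof. by move=> xy; apply: contra xy => /eqP /val_inj /perm_inj ->. Qed.

Lemma Av_Qb n (pi : 'S_n) : all (avoids_pat pi) R14 = Qb (phi pi).
Proof.
rewrite /= andbT /avoids_pat.
apply/idP/QbP.
- case/and3P => c1 c2 c3; split.
  + move=> i j k ij jk; rewrite size_phi => kn.
    have jn : j < n by lia. have in_ : i < n by lia.
    pose oi := Ordinal in_; pose oj := Ordinal jn; pose ok := Ordinal kn.
    rewrite (nth_phi pi oi) (nth_phi pi oj) (nth_phi pi ok).
    apply/negP => /andP [h1 h2]; apply: (negP c3).
    apply: (contains_of (idx := [:: oi; oj; ok]) (x0 := oi)) => //.
      by move=> a b ab; case: a ab => [|[|[|[|a]]]]; case: b => [|[|[|[|b]]]] //= *; rewrite /oi /oj /ok /=; lia.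
    by move=> a b; case: a => [|[|[|[|a]]]]; case: b => [|[|[|[|b]]]] //= *; case: ltnP => ?; lia.
  + move=> i j k l ij jk kl; rewrite size_phi => ln.
    have kn : k < n by lia. have jn : j < n by lia. have in_ : i < n by lia.
    pose oi := Ordinal in_; pose oj := Ordinal jn; pose ok := Ordinal kn; pose ol := Ordinal ln.
    rewrite (nth_phi pi oi) (nth_phi pi oj) (nth_phi pi ok) (nth_phi pi ol).
    apply/negP => /and3P [h1 h2 h3].
    have dij : nat_of_ord (pi oi) != nat_of_ord (pi oj) by apply: dval; rewrite -val_eqE /oi /oj /=; lia.
    case: (ltnP (pi oi) (pi oj)) => hij.
    * apply: (negP c1).
      apply: (contains_of (idx := [:: oi; oj; ok; ol]) (x0 := oi)) => //.
        by move=> a b ab; case: a ab => [|[|[|[|[|a]]]]]; case: b => [|[|[|[|[|b]]]]] //= *; rewrite /oi /oj /ok /ol /=; lia.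
      by move=> a b; case: a => [|[|[|[|[|a]]]]]; case: b => [|[|[|[|[|b]]]]] //= *; case: ltnP => ?; lia.
    * apply: (negP c2).
      apply: (contains_of (idx := [:: oi; oj; ok; ol]) (x0 := oi)) => //.
        by move=> a b ab; case: a ab => [|[|[|[|[|a]]]]]; case: b => [|[|[|[|[|b]]]]] //= *; rewrite /oi /oj /ok /ol /=; lia.
      by move=> a b; case: a => [|[|[|[|[|a]]]]]; case: b => [|[|[|[|[|b]]]]] //= *; case: ltnP => ?; lia.
- case=> h3 h4; apply/and3P; split.
  + apply/negP => /contains_get [f hf].
    pose o0 := @Ordinal (size [:: 1; 2; 4; 3]) 0 isT. pose o1 := @Ordinal (size [:: 1; 2; 4; 3]) 1 isT.
    pose o2 := @Ordinal (size [:: 1; 2; 4; 3]) 2 isT. pose o3 := @Ordinal (size [:: 1; 2; 4; 3]) 3 isT.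
    have /andP [/implyP /(_ isT) f01 _] := hf o0 o1.
    have /andP [/implyP /(_ isT) f12 _] := hf o1 o2.
    have /andP [/implyP /(_ isT) f23 /eqP e23] := hf o2 o3.
    have /andP [_ /eqP e03] := hf o0 o3.
    have /andP [_ /eqP e13] := hf o1 o3.
    have d23 : nat_of_ord (pi (f o2)) != nat_of_ord (pi (f o3)) by apply: dval; rewrite -val_eqE /=; lia.
    have := h4 (f o0) (f o1) (f o2) (f o3) f01 f12 f23 ltac:(rewrite size_phi; exact: ltn_ord).
    rewrite !nth_phi; move: e23 e03 e13 d23 => /= e23 e03 e13 d23.
    apply/negP; apply/negPn; apply/and3P; split; [by rewrite e03 | by rewrite e13 |].
    by move: e23 d23; case: ltnP => // *; lia.
  + apply/negP => /contains_get [f hf].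
    pose o0 := @Ordinal (size [:: 2; 1; 4; 3]) 0 isT. pose o1 := @Ordinal (size [:: 2; 1; 4; 3]) 1 isT.
    pose o2 := @Ordinal (size [:: 2; 1; 4; 3]) 2 isT. pose o3 := @Ordinal (size [:: 2; 1; 4; 3]) 3 isT.
    have /andP [/implyP /(_ isT) f01 _] := hf o0 o1.
    have /andP [/implyP /(_ isT) f12 _] := hf o1 o2.
    have /andP [/implyP /(_ isT) f23 /eqP e23] := hf o2 o3.
    have /andP [_ /eqP e03] := hf o0 o3.
    have /andP [_ /eqP e13] := hf o1 o3.
    have d23 : nat_of_ord (pi (f o2)) != nat_of_ord (pi (f o3)) by apply: dval; rewrite -val_eqE /=; lia.
    have := h4 (f o0) (f o1) (f o2) (f o3) f01 f12 f23 ltac:(rewrite size_phi; exact: ltn_ord).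
    rewrite !nth_phi; move: e23 e03 e13 d23 => /= e23 e03 e13 d23.
    apply/negP; apply/negPn; apply/and3P; split; [by rewrite e03 | by rewrite e13 |].
    by move: e23 d23; case: ltnP => // *; lia.
  + apply/negP => /contains_get [f hf].
    pose o0 := @Ordinal (size [:: 3; 2; 1]) 0 isT. pose o1 := @Ordinal (size [:: 3; 2; 1]) 1 isT.
    pose o2 := @Ordinal (size [:: 3; 2; 1]) 2 isT.
    have /andP [/implyP /(_ isT) f01 /eqP e01] := hf o0 o1.
    have /andP [/implyP /(_ isT) f12 /eqP e12] := hf o1 o2.
    have d01 : nat_of_ord (pi (f o0)) != nat_of_ord (pi (f o1)) by apply: dval; rewrite -val_eqE /=; lia.
    have d12 : nat_of_ord (pi (f o1)) != nat_of_ord (pi (f o2)) by apply: dval; rewrite -val_eqE /=; lia.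
    have := h3 (f o0) (f o1) (f o2) f01 f12 ltac:(rewrite size_phi; exact: ltn_ord).
    rewrite !nth_phi; move: e01 e12 d01 d12 => /= e01 e12 d01 d12.
    apply/negP; apply/negPn; apply/andP; split.
      by move: e12 d12; case: ltnP => // *; lia.
    by move: e01 d01; case: ltnP => // *; lia.
Qed.


Lemma Av_count n : #|Av n R14| = a n.
Proof.
rewrite /Av cardsE cardE -deprecated_filter_index_enum size_filter.
rewrite (eq_count (a2 := fun pi => Qb (phi pi))); last by move=> pi; exact: Av_Qb.
rewrite /a -(count_map (@phi n) Qb); apply/seq.permP.
apply: uniq_perm.
- rewrite map_inj_uniq ?index_enum_uniq //; exact: phi_inj.
- exact: permutations_uniq.
- move=> s; rewrite mem_permutations; apply/mapP/idP => [[pi _ ->] | ps].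
    exact: phi_perm.
  by have [pi e] := phi_surj ps; exists pi; rewrite ?mem_index_enum.
Qed.

Definition f k := 'C(k, 0) + 'C(k, 1) + 2 * 'C(k, 2) + 2 * 'C(k, 3).

Lemma b2 n : 2 * 'C(n, 2) + n = n * n.
Proof. elim: n => // n IH; rewrite binS bin1; nia. Qed.

Lemma fS n : f n.+1 = f n + n.+1 + n * n.
Proof. rewrite /f !binS !bin0 !bin1; have := b2 n; lia. Qed.

Lemma size_Elist' m : size (Elist m) = m + m.-1 * m.-1.
Proof. by rewrite size_cat size_map size_allpairs !size_iota. Qed.

Lemma a0 : a 0 = 1.
Proof.
rewrite /a /=; have -> : Qb [::] by apply/QbP; split; [move=> i j k _ _ | move=> i j k l _ _ _]; by rewrite ltn0.
by [].
Qed.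

Lemma aS n : a n.+1 = f n.
Proof.
elim: n => [|n IH]; first by rewrite a_rec a0 size_Elist'.
by rewrite a_rec IH fS size_Elist' /=; lia.
Qed.

Lemma f0 : f 0 = 1. Proof. by []. Qed.
Lemma f1 : f 1 = 2. Proof. by []. Qed.
Lemma f2 : f 2 = 5. Proof. by []. Qed.
Lemma f3 : f 3 = 12. Proof. by []. Qed.
Lemma f4 : f 4 = 25. Proof. by []. Qed.
Lemma f5 : f 5 = 46. Proof. by []. Qed.

Theorem mainTheorem14 :
  (forall N : nat,
     (((1 - 'X) ^+ 4 *
        \sum_(k < N.+1) (#|Av k R14|%:R : int) *: 'X^k)`_N
      = ((1 - 'X) ^+ 4 + 'X * (1 - 2%:R *: 'X + 3%:R *: 'X^2) : {poly int})`_N)%R)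
  /\
  (forall n : nat, (1 <= n)%N ->
     #|Av n R14|
     = 'C(n.-1, 0) + 'C(n.-1, 1) + 2 * 'C(n.-1, 2) + 2 * 'C(n.-1, 3)).
Proof.
split; last by move=> [//|n] _; rewrite Av_count aS.
move=> N.
have -> : (\sum_(k < N.+1) (#|Av k R14|%:R : int) *: 'X^k = \poly_(k < N.+1) (#|Av k R14|%:R : int))%R.
  by rewrite poly_def.
have -> : ((1 - 'X) ^+ 4 + 'X * (1 - 2%:R *: 'X + 3%:R *: 'X^2) : {poly int})%R =
          (1 - 'X^1 *+ 3 + 'X^2 *+ 4 - 'X^3 + 'X^4)%R.
  by rewrite !scaler_nat; ring.
have -> : ((1 - 'X) ^+ 4 : {poly int})%R = (1 - 'X^1 *+ 4 + 'X^2 *+ 6 - 'X^3 *+ 4 + 'X^4)%R by ring.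
rewrite !mulrDl ?mulNr mul1r !mulrnAl !coefD ?coefN ?coefB !coefMn !coefXnM coef1 !coefXn !coef_poly.
case: N => [|[|[|[|[|[|[|M]]]]]]]; rewrite ?subSS ?subn0 !Av_count ?a0 ?aS ?f0 ?f1 ?f2 ?f3 ?f4 ?f5 /=; try lia.
rewrite !fS !ifT; lia.
Qed.
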